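(* Fix $\mathbf{x}'\in\Omega$ and let $\mathbf{F}\in\mathbb{R}^{3\times2}$ have rank $2$. Then $W_{str}(\mathbf{x}',\mathbf{F})=0$ if and only if $\mathbf{F}^T\mathbf{F}=g$, where $$g=\lambda^2\,\mathbf{m}\otimes\mathbf{m}+\lambda^{-1}\,\mathbf{m}_\perp\otimes\mathbf{m}_\perp\in\mathbb{R}^{2\times2},$$ $\lambda=\big(\tfrac{s+1}{s_0+1}\big)^{1/3}$, and $\mathbf{m}_\perp\in\mathbb{S}^1$ is a unit vector perpendicular to $\mathbf{m}$.
   Context: Let $\Omega\subset\mathbb{R}^2$ be a bounded Lipschitz domain. At the point $\mathbf{x}'$ we are given scalars $s,s_0$ with $-1<s,s_0<\infty$ (values of given functions $s,s_0\in L^\infty(\Omega)$) and a unit vector $\mathbf{m}\in\mathbb{S}^1\subset\mathbb{R}^2$ (value at $\mathbf{x}'$ of the blueprinted director field). For $\mathbf{F}\in\mathbb{R}^{3\times2}$ of rank 2, let $\mathrm{I}(\mathbf{F})=\mathbf{F}^T\mathbf{F}$, $J(\mathbf{F})=\det\mathrm{I}(\mathbf{F})$, $C_{\mathbf{m}}(\mathbf{F})=\mathbf{m}\cdot\mathrm{I}(\mathbf{F})\mathbf{m}$, and define the stretching energy density $$W_{str}(\mathbf{x}',\mathbf{F})=\lambda\Big[\frac{1}{J(\mathbf{F})}+\frac{1}{s+1}\Big(\operatorname{tr}\mathrm{I}(\mathbf{F})+s_0\,C_{\mathbf{m}}(\mathbf{F})+s\,\frac{J(\mathbf{F})}{C_{\mathbf{m}}(\mathbf{F})}\Big)\Big]-3,\qquad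 \lambda=\Big(\frac{s+1}{s_0+1}\Big)^{1/3}.$$ *)

(* Defs.v *)
From HB Require Import structures.
From mathcomp Require Import all_boot all_order all_algebra.
From mathcomp Require Import all_classical all_reals all_analysis.
Set Implicit Arguments. Unset Strict Implicit. Unset Printing Implicit Defensive.
Import Order.TTheory GRing.Theory Num.Theory.
Local Open Scope ring_scope.

Section Defs.
Variable R : realType.

Definition Iform (F : 'M[R]_(3,2)) : 'M[R]_2 := F^T *m F.
Definition Jdet (F : 'M[R]_(3,2)) : R := \det (Iform F).
Definition Cm (m : 'cV[R]_2) (F : 'M[R]_(3,2)) : R := (m^T *m Iform F *m m) 0 0.
Definition lam (s s0 : R) : R := ((s + 1) / (s0 + 1)) `^ (3%:R^-1).
(* stretching energy density at the point x' (values s, s0, m there) *)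
Definition Wstr (s s0 : R) (m : 'cV[R]_2) (F : 'M[R]_(3,2)) : R :=
  lam s s0 * ((Jdet F)^-1 + (s + 1)^-1 *
     (\tr (Iform F) + s0 * Cm m F + s * (Jdet F / Cm m F))) - 3%:R.
Definition dot2 (u v : 'cV[R]_2) : R := (u^T *m v) 0 0.
End Defs.

(* Main.v *)
Require Import Defs.
From HB Require Import structures.
From mathcomp Require Import all_boot all_order all_algebra.
From mathcomp Require Import all_classical all_reals all_analysis.
From mathcomp Require Import ring lra.
Import Order.TTheory GRing.Theory Num.Theory.
Local Open Scope ring_scope.

Lemma lam_prop (R : realType) (s s0 : R) : -1 < s -> -1 < s0 ->
  0 < lam s s0 /\ lam s s0 ^+ 3 * (s0 + 1) = s + 1.
Proof.
move=> hs hs0.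
have h1 : 0 < s + 1 by lra.
have h2 : 0 < s0 + 1 by lra.
have hq : 0 < (s + 1) / (s0 + 1) by apply: divr_gt0.
split; first exact: powR_gt0.
rewrite /lam -powR_mulrn; last exact: ltW (powR_gt0 _ hq).
rewrite -powRrM mulVf ?pnatr_eq0 // powRr1 ?(ltW hq) //.
by rewrite mulrVK // unitfE gt_eqF.
Qed.

Lemma core (R : realType) (l s s0 a b c : R) : 0 < l -> -1 < s -> -1 < s0 ->
  l ^+ 3 * (s0 + 1) = s + 1 -> 0 < a -> 0 < a * c - b ^+ 2 ->
  (l * ((a * c - b ^+ 2)^-1 + (s + 1)^-1 * ((a + c) + s0 * a + s * ((a * c - b ^+ 2) / a))) - 3%:R = 0)
  <-> (a = l ^+ 2 /\ b = 0 /\ c = l^-1).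
Proof.
move=> hl hs hs0 hls ha hJ.
have h2 : 0 < s0 + 1 by lra.
have -> : s = l ^+ 3 * (s0 + 1) - 1 by lra.
have hl0 : l != 0 by rewrite gt_eqF.
have h20 : s0 + 1 != 0 by rewrite gt_eqF.
have ht : l ^+ 3 * (s0 + 1) - 1 + 1 != 0 by rewrite addrNK mulf_neq0 // expf_neq0.
split; last first.
  case=> -> [-> ->].
  by field; rewrite ?hl0 ?ht.
set t := l ^+ 3 * (s0 + 1) - 1 + 1.
have htp : 0 < t by rewrite /t addrNK mulr_gt0 // exprn_gt0.
set r := Num.sqrt a / l.
have hr : 0 < r by rewrite divr_gt0 // sqrtr_gt0.
have ha' : a = r ^+ 2 * l ^+ 2.
  by rewrite /r expr_div_n sqr_sqrtr ?(ltW ha) // divfK // expf_neq0.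
move: hJ; rewrite ha'; set J := _ - _ => hJ.
have hJ0 : J != 0 by rewrite gt_eqF.
have hr0 : r != 0 by rewrite gt_eqF.
move=> HW.
have key : (J / l - r) ^+ 2 + (J / l) * r * ((r - 1) ^+ 2 * (r + 2%:R)) + J * b ^+ 2 / (l ^+ 2 * t) = 0.
  rewrite -[RHS](mul0r ((J / l) * r ^+ 2)) -HW /t /J.
  by field; rewrite hl0 hr0 ht exprMn -/J hJ0.
have hx : 0 <= (J / l - r) ^+ 2 by apply: sqr_ge0.
have hy : 0 <= (J / l) * r * ((r - 1) ^+ 2 * (r + 2%:R)).
  apply: mulr_ge0; first by rewrite mulr_ge0 ?(ltW hr) ?divr_ge0 ?(ltW hJ) ?(ltW hl).
  by rewrite mulr_ge0 ?sqr_ge0 //; lra.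
have hz : 0 <= J * b ^+ 2 / (l ^+ 2 * t).
  by apply: divr_ge0; [apply: mulr_ge0 (ltW hJ) (sqr_ge0 _) | apply: mulr_ge0 (exprn_ge0 _ (ltW hl)) (ltW htp)].
move: key hx hy hz.
set X := (J / l - r) ^+ 2; set Y := (J / l) * r * _; set Z := J * b ^+ 2 / _ => key hx hy hz.
have ez : Z = 0 by lra.
have ey : Y = 0 by lra.
have ex : X = 0 by lra.
have htp0 : t != 0 by rewrite gt_eqF.
have hb : b = 0.
  have : b ^+ 2 = Z * (l ^+ 2 * t) / J by rewrite /Z; field; rewrite hJ0 hl0 htp0.
  by rewrite ez !mul0r => /eqP; rewrite sqrf_eq0 => /eqP.
have hr2 : 0 < r + 2%:R by lra.
have hr1 : r = 1.
  have : (r - 1) ^+ 2 = Y / ((J / l) * r * (r + 2%:R)).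
    by rewrite /Y; field; rewrite hJ0 hl0 hr0 gt_eqF.
  by rewrite ey mul0r => /eqP; rewrite sqrf_eq0 subr_eq0 => /eqP.
have hJl : J = l.
  move/eqP: ex; rewrite sqrf_eq0 subr_eq0 hr1 => /eqP hh.
  by rewrite -[J](divfK hl0) hh mul1r.
move: hJl; rewrite /J hb hr1 expr1n !mul1r expr0n /= subr0 => hc.
split; first by [].
split; first by [].
apply: (mulfI (expf_neq0 2 hl0)); by rewrite hc expr2 mulrK ?unitfE.
Qed.

Lemma sum2 (R : realType) (f : 'I_2 -> R) : \sum_(k < 2) f k = f 0 + f 1.
Proof. by rewrite big_ord_recl big_ord1; congr (_ + f _); apply/val_inj. Qed.
Lemma sum3 (R : realType) (f : 'I_3 -> R) : \sum_(k < 3) f k = f 0 + f 1 + f 2%:R.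
Proof.
rewrite big_ord_recl big_ord_recl big_ord1 addrA; congr (_ + f _ + f _); by apply/val_inj.
Qed.

Section S.
Variable R : realType.
Variable F : 'M[R]_(3,2).
Variable m : 'cV[R]_2.
Lemma Iform_e i j : Iform F i j = F 0 i * F 0 j + F 1 i * F 1 j + F 2%:R i * F 2%:R j.
Proof. by rewrite /Iform mxE sum3 !mxE. Qed.
Lemma Cm_e : Cm m F = m 0 0 * (m 0 0 * Iform F 0 0 + m 1 0 * Iform F 1 0) + m 1 0 * (m 0 0 * Iform F 0 1 + m 1 0 * Iform F 1 1).
Proof. rewrite /Cm /Iform !(mxE, sum2, sum3); ring. Qed.
Lemma det_e : Jdet F = Iform F 0 0 * Iform F 1 1 - Iform F 0 1 * Iform F 1 0.
Proof.
have l00 : lift (0:'I_2) (0:'I_1) = 1 by apply/val_inj.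
have l10 : lift (1:'I_2) (0:'I_1) = 0 by apply/val_inj.
rewrite /Jdet (expand_det_row _ 0) sum2 /cofactor !det_mx11 !mxE /= l00 l10.
rewrite /Iform !(mxE, sum2, sum3) expr0 expr1; ring.
Qed.
Lemma tr_e : \tr (Iform F) = Iform F 0 0 + Iform F 1 1.
Proof. by rewrite /mxtrace sum2. Qed.
End S.
Section Coord.
Variable R : realFieldType.
Definition qf (x y z u0 u1 v0 v1 : R) := u0 * (v0 * x + v1 * y) + u1 * (v0 * y + v1 * z).

Lemma coord (m0 m1 p0 p1 x y z k1 k2 : R) :
  m0 * m0 + m1 * m1 = 1 -> p0 * p0 + p1 * p1 = 1 -> m0 * p0 + m1 * p1 = 0 ->
  [/\ x + z = qf x y z m0 m1 m0 m1 + qf x y z p0 p1 p0 p1,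
      x * z - y * y = qf x y z m0 m1 m0 m1 * qf x y z p0 p1 p0 p1 - (qf x y z m0 m1 p0 p1) ^+ 2 &
      (x = k1 * (m0 * m0) + k2 * (p0 * p0) /\ y = k1 * (m0 * m1) + k2 * (p0 * p1)
        /\ z = k1 * (m1 * m1) + k2 * (p1 * p1)) <->
      (qf x y z m0 m1 m0 m1 = k1 /\ qf x y z m0 m1 p0 p1 = 0 /\ qf x y z p0 p1 p0 p1 = k2)].
Proof.
move=> hm hp hmp.
set d := m0 * p1 - m1 * p0.
have hd : d * d = 1.
  have -> : d * d = (m0 * m0 + m1 * m1) * (p0 * p0 + p1 * p1) - (m0 * p0 + m1 * p1) ^+ 2 by rewrite /d; ring.
  by rewrite hm hp hmp mul1r expr0n subr0.
have hp0 : p0 = - (m1 * d).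
  have h : p0 * (m0 * m0 + m1 * m1) = m0 * (m0 * p0 + m1 * p1) - m1 * d by rewrite /d; ring.
  by rewrite hm hmp mulr1 mulr0 sub0r in h.
have hp1 : p1 = m0 * d.
  have h : p1 * (m0 * m0 + m1 * m1) = m1 * (m0 * p0 + m1 * p1) + m0 * d by rewrite /d; ring.
  by rewrite hm hmp mulr1 mulr0 add0r in h.
have e00 : m0 * m0 + p0 * p0 = 1.
  have -> : m0 * m0 + p0 * p0 = m0 * m0 + m1 * m1 * (d * d) by rewrite hp0; ring.
  by rewrite hd mulr1.
have e11 : m1 * m1 + p1 * p1 = 1.
  have -> : m1 * m1 + p1 * p1 = m0 * m0 * (d * d) + m1 * m1 by rewrite hp1; ring.
  by rewrite hd mulr1.
have e01 : m0 * m1 + p0 * p1 = 0.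
  have -> : m0 * m1 + p0 * p1 = m0 * m1 * (1 - d * d) by rewrite hp0 hp1; ring.
  by rewrite hd subrr mulr0.
split.
- have -> : qf x y z m0 m1 m0 m1 + qf x y z p0 p1 p0 p1 =
     x * (m0 * m0 + p0 * p0) + 2%:R * y * (m0 * m1 + p0 * p1) + z * (m1 * m1 + p1 * p1)
    by rewrite /qf; ring.
  by rewrite e00 e01 e11; ring.
- have -> : qf x y z m0 m1 m0 m1 * qf x y z p0 p1 p0 p1 - (qf x y z m0 m1 p0 p1) ^+ 2 =
     (x * z - y * y) * (d * d) by rewrite /qf /d; ring.
  by rewrite hd mulr1.
split.
- case=> -> [-> ->].
  have E : forall u0 u1 v0 v1, qf (k1 * (m0 * m0) + k2 * (p0 * p0)) (k1 * (m0 * m1) + k2 * (p0 * p1))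
     (k1 * (m1 * m1) + k2 * (p1 * p1)) u0 u1 v0 v1 =
     k1 * ((u0 * m0 + u1 * m1) * (v0 * m0 + v1 * m1)) + k2 * ((u0 * p0 + u1 * p1) * (v0 * p0 + v1 * p1)).
    by move=> *; rewrite /qf; ring.
  rewrite !E hm hp hmp.
  have hpm : p0 * m0 + p1 * m1 = 0 by rewrite mulrC (mulrC p1).
  rewrite hpm.
  by split; [|split]; ring.
- case=> ha [hb hc].
  have Ex : x = qf x y z m0 m1 m0 m1 * (m0 * m0) + 2%:R * qf x y z m0 m1 p0 p1 * (m0 * p0)
      + qf x y z p0 p1 p0 p1 * (p0 * p0) + (x * (1 - (m0 * m0 + p0 * p0) ^+ 2)
      - 2%:R * y * (m0 * m0 + p0 * p0) * (m0 * m1 + p0 * p1) - z * (m0 * m1 + p0 * p1) ^+ 2)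
    by rewrite /qf; ring.
  have Ey : y = qf x y z m0 m1 m0 m1 * (m0 * m1) + qf x y z m0 m1 p0 p1 * (m0 * p1 + p0 * m1)
      + qf x y z p0 p1 p0 p1 * (p0 * p1) + (- x * (m0 * m0 + p0 * p0) * (m0 * m1 + p0 * p1)
      + y * (1 - (m0 * m0 + p0 * p0) * (m1 * m1 + p1 * p1) - (m0 * m1 + p0 * p1) ^+ 2)
      - z * (m0 * m1 + p0 * p1) * (m1 * m1 + p1 * p1))
    by rewrite /qf; ring.
  have Ez : z = qf x y z m0 m1 m0 m1 * (m1 * m1) + 2%:R * qf x y z m0 m1 p0 p1 * (m1 * p1)
      + qf x y z p0 p1 p0 p1 * (p1 * p1) + (z * (1 - (m1 * m1 + p1 * p1) ^+ 2)
      - 2%:R * y * (m1 * m1 + p1 * p1) * (m0 * m1 + p0 * p1) - x * (m0 * m1 + p0 * p1) ^+ 2)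
    by rewrite /qf; ring.
  rewrite e00 e01 e11 ha hb hc in Ex Ey Ez.
  split; first by rewrite Ex; ring.
  split; first by rewrite Ey; ring.
  by rewrite Ez; ring.
Qed.
End Coord.
Arguments qf {R}.
Arguments coord {R}.
Lemma ord3_cases (i : 'I_3) : [\/ i = 0, i = 1 | i = 2%:R].
Proof.
case: i => [[|[|[|n]]] Hi]; [apply: Or31|apply: Or32|apply: Or33|]; try by apply/val_inj.
by [].
Qed.

Lemma det_neq0 (R : realType) (F : 'M[R]_(3,2)) : \rank F = 2%N -> Jdet F != 0.
Proof.
move=> hr; apply/negP => /det0P [v vn0 hv].
have rf : row_free F^T by rewrite /row_free mxrank_tr hr.
set w := v *m F^T.
have hw : w *m w^T = 0.
  by rewrite /w trmx_mul trmxK mulmxA -(mulmxA v) -/(Iform F) hv mul0mx.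
have hw0 : w = 0.
  have h : w 0 0 ^+ 2 + w 0 1 ^+ 2 + w 0 2%:R ^+ 2 = 0.
    by move: (congr1 (fun M : 'M[R]_1 => M 0 0) hw); rewrite mxE sum3 !mxE !expr2.
  have h0 := sqr_ge0 (w 0 0); have h1 := sqr_ge0 (w 0 1); have h2 := sqr_ge0 (w 0 2%:R).
  apply/matrixP => i j; rewrite [RHS]mxE (ord1 i).
  by case: (ord3_cases j) => ->; apply/eqP; rewrite -sqrf_eq0; apply/eqP; lra.
move/negP: vn0; apply; apply/eqP.
by apply: (row_free_inj rf); rewrite mul0mx.
Qed.

Lemma ord2_cases (i : 'I_2) : i = 0 \/ i = 1.
Proof. case: i => [[|[|n]] Hi]; [left|right|]; try by apply/val_inj. by []. Qed.

Theorem proposition2p3 (R : realType) (s s0 : R) (m mperp : 'cV[R]_2)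
  (F : 'M[R]_(3,2)) :
  -1 < s -> -1 < s0 ->
  dot2 m m = 1 -> dot2 mperp mperp = 1 -> dot2 m mperp = 0 ->
  \rank F = 2%N ->
  (Wstr s s0 m F = 0 <->
   Iform F = (lam s s0) ^+ 2 *: (m *m m^T) + (lam s s0)^-1 *: (mperp *m mperp^T)).
Proof.
move=> hs hs0 hmm hpp hmp hr.
have [hl hl3] := @lam_prop R s s0 hs hs0.
have hJn0 := @det_neq0 R F hr.
have hyx : Iform F 1 0 = Iform F 0 1 by rewrite !Iform_e; ring.
have dm : m 0 0 * m 0 0 + m 1 0 * m 1 0 = 1 by move: hmm; rewrite /dot2 mxE sum2 !mxE.
have dp : mperp 0 0 * mperp 0 0 + mperp 1 0 * mperp 1 0 = 1 by move: hpp; rewrite /dot2 mxE sum2 !mxE.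
have dmp : m 0 0 * mperp 0 0 + m 1 0 * mperp 1 0 = 0 by move: hmp; rewrite /dot2 mxE sum2 !mxE.
have [Etr EJ Eeq] := coord (m 0 0) (m 1 0) (mperp 0 0) (mperp 1 0) (Iform F 0 0) (Iform F 0 1) (Iform F 1 1) (lam s s0 ^+ 2) (lam s s0)^-1 dm dp dmp.
have hCm : Cm m F = qf (Iform F 0 0) (Iform F 0 1) (Iform F 1 1) (m 0 0) (m 1 0) (m 0 0) (m 1 0).
  by rewrite Cm_e hyx /qf; ring.
have hJ : Jdet F = Iform F 0 0 * Iform F 1 1 - Iform F 0 1 * Iform F 0 1 by rewrite det_e hyx.
have hJge : 0 <= Iform F 0 0 * Iform F 1 1 - Iform F 0 1 * Iform F 0 1.
  have -> : Iform F 0 0 * Iform F 1 1 - Iform F 0 1 * Iform F 0 1 =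
    (F 0 0 * F 1 1 - F 0 1 * F 1 0) ^+ 2 + (F 0 0 * F 2%:R 1 - F 0 1 * F 2%:R 0) ^+ 2
    + (F 1 0 * F 2%:R 1 - F 1 1 * F 2%:R 0) ^+ 2 by rewrite !Iform_e; ring.
  by rewrite !addr_ge0 ?sqr_ge0.
have hJpos : 0 < Iform F 0 0 * Iform F 1 1 - Iform F 0 1 * Iform F 0 1.
  by rewrite lt_neqAle hJge andbT eq_sym -hJ.
have qge0 : forall u0 u1, 0 <= qf (Iform F 0 0) (Iform F 0 1) (Iform F 1 1) u0 u1 u0 u1.
  move=> u0 u1.
  have -> : qf (Iform F 0 0) (Iform F 0 1) (Iform F 1 1) u0 u1 u0 u1 =
    (F 0 0 * u0 + F 0 1 * u1) ^+ 2 + (F 1 0 * u0 + F 1 1 * u1) ^+ 2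
    + (F 2%:R 0 * u0 + F 2%:R 1 * u1) ^+ 2 by rewrite /qf !Iform_e; ring.
  by rewrite !addr_ge0 ?sqr_ge0.
rewrite EJ in hJpos.
have ha : 0 < qf (Iform F 0 0) (Iform F 0 1) (Iform F 1 1) (m 0 0) (m 1 0) (m 0 0) (m 1 0).
  rewrite lt_neqAle qge0 andbT; apply/negP => /eqP ha0.
  move: hJpos; rewrite -ha0 mul0r sub0r oppr_gt0 => h.
  by have := sqr_ge0 (qf (Iform F 0 0) (Iform F 0 1) (Iform F 1 1) (m 0 0) (m 1 0) (mperp 0 0) (mperp 1 0)); lra.
rewrite /Wstr hJ EJ tr_e Etr hCm (@core R (lam s s0) s s0 _ _ _ hl hs hs0 hl3 ha hJpos) -Eeq.
split.
- case=> h00 [h01 h11].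
  have E2 : forall i j, (lam s s0 ^+ 2 *: (m *m m^T) + (lam s s0)^-1 *: (mperp *m mperp^T)) i j
     = lam s s0 ^+ 2 * (m i 0 * m j 0) + (lam s s0)^-1 * (mperp i 0 * mperp j 0).
    by move=> i j; rewrite !mxE !big_ord1 !mxE.
  apply/matrixP => i j; rewrite E2.
  case: (ord2_cases i) => ->; case: (ord2_cases j) => ->; rewrite ?hyx ?h00 ?h01 ?h11 //.
  by rewrite (mulrC (m 1 0)) (mulrC (mperp 1 0)).
- move=> E.
  have E' : forall i j, Iform F i j = lam s s0 ^+ 2 * (m i 0 * m j 0) + (lam s s0)^-1 * (mperp i 0 * mperp j 0).
    by move=> i j; rewrite E !mxE !big_ord1 !mxE.
  by rewrite !E'.
Qed.
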